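(* For all integers $i,j,k,m\ge0$: if $\omega_i+\omega_j-\omega_m=0$, or $\omega_i-\omega_j+\omega_m=0$, or $-\omega_i+\omega_j+\omega_m=0$, then $\overline{\mathfrak{C}}_{ijm}=0$; and if $\omega_i+\omega_j+\omega_k-\omega_m=0$, or $\omega_i+\omega_j-\omega_k+\omega_m=0$, or $\omega_i-\omega_j+\omega_k+\omega_m=0$, or $-\omega_i+\omega_j+\omega_k+\omega_m=0$, then $\mathfrak{C}_{ijkm}=0$.
   Context: $\omega_n=n+2$. $\mathfrak{e}_n(x)=\mathfrak{N}_nP_n^{(3/2,3/2)}(\cos x)$ with $P_n^{(3/2,3/2)}$ the Jacobi polynomial and $\mathfrak{N}_n=\frac{\sqrt{\omega_n\Gamma(1+n)\Gamma(4+n)}}{2\sqrt2\,\Gamma(5/2+n)}$. $\overline{\mathfrak{C}}_{ijm}=\int_0^\pi\mathfrak{e}_i\mathfrak{e}_j\mathfrak{e}_m\sin^4x\,dx$, $\mathfrak{C}_{ijkm}=\int_0^\pi\mathfrak{e}_i\mathfrak{e}_j\mathfrak{e}_k\mathfrak{e}_m\sin^6x\,dx$. *)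

(* Defs.v *)
From Stdlib Require Import Reals Arith.
From Coquelicot Require Import Coquelicot.
Open Scope R_scope.

Definition omega (n : nat) : R := INR n + 2.

(* Euler's Gamma function, Gamma(s) = int_0^oo t^(s-1) e^(-t) dt
   (used only at arguments s >= 1, where the integrand is continuous). *)
Definition Gamma (s : R) : R :=
  RInt_gen (fun t => Rpower t (s - 1) * exp (- t))
           (at_point 0) (Rbar_locally p_infty).

Fixpoint falling (a : R) (k : nat) : R :=
  match k with
  | O => 1
  | S k' => falling a k' * (a - INR k')
  end.
Definition gbinom (a : R) (k : nat) : R := falling a k / INR (Factorial.fact k).

Definition jacobiP (al be : R) (n : nat) (x : R) : R :=
  sum_f_R0 (fun s => gbinom (INR n + al) (n - s) * gbinom (INR n + be) s
                     * ((x - 1) / 2) ^ s * ((x + 1) / 2) ^ (n - s)) n.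

Definition normN (n : nat) : R :=
  sqrt (omega n * Gamma (1 + INR n) * Gamma (4 + INR n))
  / (2 * sqrt 2 * Gamma (5 / 2 + INR n)).

Definition efun (n : nat) (x : R) : R := normN n * jacobiP (3/2) (3/2) n (cos x).

Definition Cbar (i j m : nat) : R :=
  RInt (fun x => efun i x * efun j x * efun m x * sin x ^ 4) 0 PI.

Definition C4 (i j k m : nat) : R :=
  RInt (fun x => efun i x * efun j x * efun k x * efun m x * sin x ^ 6) 0 PI.

(* Main.v *)
Require Import Defs.
From Stdlib Require Import Reals Lra Lia Arith.
From Coquelicot Require Import Coquelicot.
Open Scope R_scope.

Fixpoint rising (x : R) (k : nat) : R :=
  match k with O => 1 | S k' => rising x k' * (x + INR k') end.

Fixpoint bin (n k : nat) : R :=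
  match n, k with
  | _, O => 1
  | O, S _ => 0
  | S n', S k' => bin n' k' + bin n' (S k')
  end.

Lemma bin_gt : forall n k, (n < k)%nat -> bin n k = 0.
Proof.
  induction n as [|n IH]; intros k Hk; destruct k as [|k]; try lia; simpl; auto.
  rewrite !IH; try lia; ring.
Qed.

Lemma bin_fact : forall n s, (s <= n)%nat ->
  bin n s * INR (fact s) * INR (fact (n - s)) = INR (fact n).
Proof.
  induction n as [|n IH]; intros s Hs.
  - destruct s; [simpl; ring | lia].
  - destruct s as [|s].
    + simpl bin. rewrite Nat.sub_0_r. simpl fact at 1. simpl INR at 1. ring.
    + simpl bin. replace (S n - S s)%nat with (n - s)%nat by lia.
      destruct (Nat.eq_dec s n) as [->|Hne].
      * rewrite (bin_gt n (S n)) by lia. rewrite Nat.sub_diag.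
        pose proof (IH n (le_n n)) as H. rewrite Nat.sub_diag in H.
        rewrite Rplus_0_r.
        assert (Hb: bin n n = 1).
        { simpl in H. apply (Rmult_eq_reg_r (INR (fact n))); [lra | apply INR_fact_neq_0]. }
        rewrite Hb; simpl INR; ring.
      * assert (Hs1 : (s <= n)%nat) by lia. assert (Hs2 : (S s <= n)%nat) by lia.
        pose proof (IH s Hs1) as H1.
        pose proof (IH (S s) Hs2) as H2.
        replace (n - s)%nat with (S (n - S s)) in * by lia.
        change (fact (S s)) with (S s * fact s)%nat in *.
        change (fact (S (n - S s))) with (S (n - S s) * fact (n - S s))%nat in *.
        change (fact (S n)) with (S n * fact n)%nat.
        rewrite !mult_INR in *.
        replace (INR (S (n - S s))) with (INR n - INR s) in *
          by (rewrite S_INR, minus_INR by lia; rewrite S_INR; ring).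
        rewrite !S_INR in *.
        transitivity ((bin n s * INR (fact s) * ((INR n - INR s) * INR (fact (n - S s)))) * (INR s + 1)
          + (bin n (S s) * ((INR s + 1) * INR (fact s)) * INR (fact (n - S s))) * (INR n - INR s)); [ring|].
        rewrite H1, H2. ring.
Qed.

Lemma sum_shift : forall (g : nat -> R) n,
  sum_f_R0 (fun s => g (S s)) n = sum_f_R0 g (S n) - g O.
Proof.
  intros g n; induction n as [|n IH]; simpl; [ring|]. simpl in IH. rewrite IH. ring.
Qed.

Lemma pascal_sum : forall (f : nat -> R) n,
  sum_f_R0 (fun s => (-1)^s * bin (S n) s * f s) (S n) =
  sum_f_R0 (fun s => (-1)^s * bin n s * (f s - f (S s))) n.
Proof.
  intros f n.
  rewrite decomp_sum by lia. simpl Nat.pred.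
  transitivity ((-1)^0 * bin (S n) 0 * f 0%nat +
    (sum_f_R0 (fun s => - ((-1)^s * bin n s * f (S s))) n +
     sum_f_R0 (fun s => (fun t => (-1)^t * bin n t * f t) (S s)) n)).
  { f_equal. rewrite <- sum_plus. apply sum_eq. intros i _. simpl. ring. }
  rewrite (sum_shift (fun t => (-1)^t * bin n t * f t)). simpl sum_f_R0 at 2.
  rewrite (bin_gt n (S n)) by lia.
  replace (sum_f_R0 (fun s : nat => - ((-1) ^ s * bin n s * f (S s))) n)
    with (- sum_f_R0 (fun s : nat => ((-1) ^ s * bin n s * f (S s))) n).
  2:{ rewrite <- (Rmult_1_l (sum_f_R0 _ n)) at 1.
      rewrite Ropp_mult_distr_l, scal_sum. apply sum_eq; intros; ring. }
  replace (sum_f_R0 (fun s : nat => (-1) ^ s * bin n s * (f s - f (S s))) n)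
   with (sum_f_R0 (fun s : nat => (-1) ^ s * bin n s * f s) n +
         - sum_f_R0 (fun s : nat => ((-1) ^ s * bin n s * f (S s))) n).
  2:{ rewrite <- (Rmult_1_l (sum_f_R0 (fun s => (-1) ^ s * bin n s * f (S s)) n)).
      rewrite Ropp_mult_distr_l, scal_sum, <- sum_plus. apply sum_eq; intros; ring. }
  simpl. destruct n; simpl; ring.
Qed.

Lemma rising_S' : forall x r, rising x (S r) = x * rising (x + 1) r.
Proof.
  intros x r; induction r as [|r IH].
  - simpl. ring.
  - change (rising x (S (S r))) with (rising x (S r) * (x + INR (S r))).
    rewrite IH. change (rising (x+1) (S r)) with (rising (x+1) r * (x+1+INR r)). rewrite S_INR. ring.
Qed.

Lemma FD : forall n r c, (r < n)%nat ->
  sum_f_R0 (fun s => (-1)^s * bin n s * rising (INR s + c) r) n = 0.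
Proof.
  induction n as [|n IH]; intros r c Hr; [lia|].
  rewrite (pascal_sum (fun s => rising (INR s + c) r)).
  destruct r as [|r].
  - transitivity (sum_f_R0 (fun _ => 0) n).
    + apply sum_eq; intros; simpl; ring.
    + rewrite sum_cte; ring.
  - transitivity (- INR (S r) * sum_f_R0 (fun s => (-1)^s * bin n s * rising (INR s + (c+1)) r) n).
    + rewrite scal_sum. apply sum_eq; intros i _.
      rewrite (rising_S' (INR i + c)), (rising_S' (INR (S i) + c)).
      rewrite S_INR. simpl rising.
      replace (INR i + c + 1) with (INR i + (c + 1)) by ring.
      replace (INR i + 1 + c + 1) with (INR i + (c+1) + 1) by ring.
      replace (INR i + 1 + c) with (INR i + (c+1)) by ring.
      rewrite <- (rising_S' (INR i + (c+1)) r). simpl rising. rewrite S_INR. ring.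
    + rewrite (IH r (c+1)) by lia. ring.
Qed.

Lemma falling_S : forall z b, falling z (S b) = z * falling (z - 1) b.
Proof.
  intros z b; induction b as [|b IH].
  - simpl. ring.
  - change (falling z (S (S b))) with (falling z (S b) * (z - INR (S b))).
    rewrite IH. change (falling (z-1) (S b)) with (falling (z-1) b * (z - 1 - INR b)). rewrite S_INR. ring.
Qed.

Lemma falling_rising : forall b y, falling (y + INR b - 1) b = rising y b.
Proof.
  induction b as [|b IH]; intros y.
  - reflexivity.
  - rewrite falling_S. rewrite S_INR.
    replace (y + (INR b + 1) - 1 - 1) with (y + INR b - 1) by ring.
    rewrite IH. change (rising y (S b)) with (rising y b * (y + INR b)). ring.
Qed.

Lemma rising_add : forall y a b, rising y (a + b) = rising y a * rising (y + INR a) b.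
Proof.
  intros y a b; induction b as [|b IH].
  - rewrite Nat.add_0_r. simpl. ring.
  - rewrite Nat.add_succ_r. change (rising y (S (a+b))) with (rising y (a+b) * (y + INR (a+b))).
    change (rising (y + INR a) (S b)) with (rising (y + INR a) b * (y + INR a + INR b)).
    rewrite IH, plus_INR. ring.
Qed.

Lemma RInt_plusR (f g : R -> R) a b : ex_RInt f a b -> ex_RInt g a b ->
  RInt (fun x => f x + g x) a b = RInt f a b + RInt g a b.
Proof. intros; exact (RInt_plus f g a b H H0). Qed.
Lemma RInt_scalR (f : R -> R) a b k : ex_RInt f a b ->
  RInt (fun x => k * f x) a b = k * RInt f a b.
Proof. intros; exact (RInt_scal f a b k H). Qed.

Lemma ex_scalR (f : R -> R) a b k : ex_RInt f a b -> ex_RInt (fun x => k * f x) a b.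
Proof. intros; exact (ex_RInt_scal f a b k H). Qed.
Lemma ex_plusR (f g : R -> R) a b : ex_RInt f a b -> ex_RInt g a b -> ex_RInt (fun x => f x + g x) a b.
Proof. intros; exact (ex_RInt_plus f g a b H H0). Qed.

Definition T (a b : nat) (x : R) := (1 - cos x)^a * (1 + cos x)^b.
Definition I a b := RInt (T a b) 0 PI.

Lemma T_cont a b x : continuous (T a b) x.
Proof. apply (@ex_derive_continuous R_AbsRing R_NormedModule); unfold T; auto_derive; auto. Qed.
Lemma T_ex a b : ex_RInt (T a b) 0 PI.
Proof. apply (@ex_RInt_continuous R_CompleteNormedModule); intros; apply T_cont. Qed.

Lemma R1 a b : I (S a) b + I a (S b) = 2 * I a b.
Proof.
  unfold I. rewrite <- RInt_plusR by apply T_ex. rewrite <- RInt_scalR by apply T_ex.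
  apply RInt_ext; intros x _. unfold T. simpl. ring.
Qed.

Lemma R2 a b : (2 * INR a + 3) * I (S a) (S (S b)) = (2 * INR b + 3) * I (S (S a)) (S b).
Proof.
  set (F := fun x => (1 - cos x)^(S a) * (1 + cos x)^(S b) * sin x).
  set (df := fun x => (INR a + 3/2) * T (S a) (S (S b)) x + (- (INR b + 3/2)) * T (S (S a)) (S b) x).
  assert (HD : is_RInt df 0 PI (minus (F PI) (F 0))).
  { apply (@is_RInt_derive R_CompleteNormedModule).
    - intros x _. unfold F, df, T. auto_derive; auto.
      change (match a with 0%nat => 1 | S _ => INR a + 1 end) with (INR (S a)).
      change (match b with 0%nat => 1 | S _ => INR b + 1 end) with (INR (S b)).
      rewrite !S_INR.
      change (1 + - cos x) with (1 - cos x).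
      simpl pow.
      assert (Hs : sin x * sin x = (1 - cos x) * (1 + cos x)).
      { pose proof (sin2 x) as H. unfold Rsqr in H. rewrite H. ring. }
      set (A := (1 - cos x)^a). set (B := (1 + cos x)^b). clearbody A B.
      match goal with |- ?L = ?R => assert (E : L - R = (sin x * sin x - (1 - cos x)*(1+cos x)) * ((INR a + 1) * A * (1+cos x)*B - (INR b+1)*(1-cos x)*A*B))  end; [ field | ]. rewrite Hs in E. lra.
    - intros x _. apply (@ex_derive_continuous R_AbsRing R_NormedModule). unfold df, T. auto_derive; auto. }
  assert (H0 : minus (F PI) (F 0) = 0).
  { unfold F; rewrite sin_PI, sin_0. rewrite !Rmult_0_r. exact (minus_eq_zero (G:=R_AbelianGroup) 0). }
  rewrite H0 in HD. apply (@is_RInt_unique R_CompleteNormedModule) in HD.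
  unfold df in HD. rewrite RInt_plusR in HD.
  2,3: apply ex_scalR, T_ex.
  rewrite !RInt_scalR in HD by apply T_ex.
  unfold I. lra.
Qed.

Definition h (a b : nat) : R := 2^(a+b) * rising (1/2) a * rising (1/2) b / INR (fact (a+b)).

Lemma hrec1 a b : h (S a) b + h a (S b) = 2 * h a b.
Proof.
  unfold h. rewrite Nat.add_succ_r. simpl Nat.add.
  change (fact (S (a+b))) with (S (a+b) * fact (a+b))%nat.
  rewrite mult_INR. change (2^(S (a+b))) with (2 * 2^(a+b)).
  change (rising (1/2) (S a)) with (rising (1/2) a * (1/2 + INR a)).
  change (rising (1/2) (S b)) with (rising (1/2) b * (1/2 + INR b)).
  rewrite S_INR, plus_INR.
  pose proof (INR_fact_neq_0 (a+b)). pose proof (pos_INR a). pose proof (pos_INR b).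
  field. split; [auto| lra].
Qed.

Lemma hrec2 a b : (2 * INR a + 1) * h a (S b) = (2 * INR b + 1) * h (S a) b.
Proof.
  unfold h. rewrite Nat.add_succ_r. simpl Nat.add.
  change (rising (1/2) (S a)) with (rising (1/2) a * (1/2 + INR a)).
  change (rising (1/2) (S b)) with (rising (1/2) b * (1/2 + INR b)).
  pose proof (INR_fact_neq_0 (S (a+b))).
  field. auto.
Qed.

Definition Kc := I 1 1 / h 1 1.
Definition D a b := I a b - Kc * h a b.

Lemma h11 : h 1 1 <> 0.
Proof. unfold h. simpl. lra. Qed.

Lemma D_step a b : D (S a) (S b) = 0 -> D (S (S a)) (S b) = 0 /\ D (S a) (S (S b)) = 0.
Proof.
  intros H0.
  assert (E1 : D (S (S a)) (S b) + D (S a) (S (S b)) = 0).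
  { unfold D in *. pose proof (R1 (S a) (S b)). pose proof (hrec1 (S a) (S b)). nra. }
  assert (E2 : (2 * INR a + 3) * D (S a) (S (S b)) = (2 * INR b + 3) * D (S (S a)) (S b)).
  { unfold D. pose proof (R2 a b) as HR2. pose proof (hrec2 (S a) (S b)) as HH2. rewrite !S_INR in HH2.
    rewrite !Rmult_minus_distr_l. rewrite HR2. 
    replace ((2 * INR a + 3) * (Kc * h (S a) (S (S b)))) with (Kc * ((2 * (INR a + 1) + 1) * h (S a) (S (S b)))) by ring.
    rewrite HH2. ring. }
  assert (Hy : D (S a) (S (S b)) = - D (S (S a)) (S b)) by lra.
  rewrite Hy in E2.
  assert (Hx : (2 * INR a + 2 * INR b + 6) * D (S (S a)) (S b) = 0) by lra.
  pose proof (pos_INR a). pose proof (pos_INR b).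
  apply Rmult_integral in Hx. destruct Hx as [Hx|Hx]; [lra|]. split; lra.
Qed.

Lemma D_zero : forall a b, D (S a) (S b) = 0.
Proof.
  induction a as [|a IH]; intros b.
  - induction b as [|b IHb].
    + unfold D, Kc. field. apply h11.
    + apply (proj2 (D_step 0 b IHb)).
  - apply (proj1 (D_step a b (IH b))).
Qed.

Lemma I_closed a b : (1 <= a)%nat -> (1 <= b)%nat -> I a b = Kc * h a b.
Proof.
  intros Ha Hb. destruct a as [|a]; [lia|]. destruct b as [|b]; [lia|].
  pose proof (D_zero a b). unfold D in H. lra.
Qed.

Inductive isP : nat -> (R -> R) -> Prop :=
| isP_mon : forall d a r (f : R -> R), (r <= d)%nat ->
    (forall x, f x = a * (1 - cos x)^r) -> isP d f
| isP_add : forall d f g h, isP d f -> isP d g ->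
    (forall x, h x = f x + g x) -> isP d h.

Lemma isP_ext d f g : isP d f -> (forall x, g x = f x) -> isP d g.
Proof.
  intros H; revert g; induction H; intros g' Hg.
  - apply (isP_mon d a r); auto. intros; rewrite Hg; auto.
  - apply (isP_add d f g); auto. intros; rewrite Hg; auto.
Qed.

Lemma isP_mono d f : isP d f -> forall d', (d <= d')%nat -> isP d' f.
Proof.
  induction 1; intros d' Hd.
  - apply (isP_mon d' a r); auto; lia.
  - apply (isP_add d' f g); auto.
Qed.

Lemma isP_mul_mon d f : isP d f -> forall a r g,
  (forall x, g x = a * (1 - cos x)^r * f x) -> isP (r + d) g.
Proof.
  induction 1; intros a' r' g' Hg.
  - apply (isP_mon _ (a' * a) (r' + r)); [lia|]. intros x. rewrite Hg, H0, pow_add. ring.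
  - apply (isP_add _ (fun x => a' * (1 - cos x)^r' * f x) (fun x => a' * (1 - cos x)^r' * g x)).
    + apply (IHisP1 a' r'); auto.
    + apply (IHisP2 a' r'); auto.
    + intros x; rewrite Hg, H1; ring.
Qed.

Lemma isP_mul d1 f d2 g : isP d1 f -> isP d2 g -> isP (d1 + d2) (fun x => f x * g x).
Proof.
  intros H; revert d2 g; induction H; intros d2 g' Hg.
  - apply isP_mono with (r + d2)%nat; [|lia].
    apply (isP_mul_mon d2 g' Hg a r). intros; rewrite H0; ring.
  - apply (isP_add _ (fun x => f x * g' x) (fun x => g x * g' x)); auto.
    intros; rewrite H1; ring.
Qed.

Lemma isP_const k : isP 0 (fun _ => k).
Proof. apply (isP_mon 0 k 0); auto. intros; simpl; ring. Qed.

Lemma isP_1mc : isP 1 (fun x => 1 - cos x).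
Proof. apply (isP_mon 1 1 1); auto. intros; simpl; ring. Qed.

Lemma isP_1pc : isP 1 (fun x => 1 + cos x).
Proof.
  apply (isP_add 1 (fun _ => 2) (fun x => -1 * (1 - cos x)^1)).
  - apply (isP_mon 1 2 0); auto. intros; simpl; ring.
  - apply (isP_mon 1 (-1) 1); auto.
  - intros; simpl; ring.
Qed.

Lemma isP_scal d f k : isP d f -> isP d (fun x => k * f x).
Proof.
  intros H. apply isP_mono with (0 + d)%nat; [|lia].
  apply (isP_mul_mon d f H k 0). intros; simpl; ring.
Qed.

Lemma isP_pow d f : isP d f -> forall n, isP (n * d) (fun x => f x ^ n).
Proof.
  intros H n; induction n as [|n IH].
  - simpl. apply isP_ext with (fun _ => 1); [apply isP_const | intros; simpl; ring].
  - simpl. apply (isP_mul d f (n*d) _ H IH).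
Qed.

Lemma isP_sum d (G : nat -> R -> R) n : (forall s, (s <= n)%nat -> isP d (G s)) ->
  isP d (fun x => sum_f_R0 (fun s => G s x) n).
Proof.
  induction n as [|n IH]; intros HG.
  - simpl. apply HG; auto.
  - simpl. apply (isP_add d (fun x => sum_f_R0 (fun s => G s x) n) (G (S n))); auto.
Qed.

Lemma isP_jacobi n : isP n (fun x => jacobiP (3/2) (3/2) n (cos x)).
Proof.
  unfold jacobiP. apply isP_sum. intros s Hs.
  apply isP_ext with (fun x => (gbinom (INR n + 3/2) (n - s) * gbinom (INR n + 3/2) s)
     * (((-1/2) * (1 - cos x))^s * ((1/2) * (1 + cos x))^(n - s))).
  2:{ intros x. replace ((cos x - 1)/2) with ((-1/2) * (1 - cos x)) by field.
      replace ((cos x + 1)/2) with ((1/2) * (1 + cos x)) by field. ring. }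
  apply isP_scal.
  replace n with (s * 1 + (n - s) * 1)%nat at 1 by lia.
  apply isP_mul; apply isP_pow; apply isP_scal; [apply isP_1mc | apply isP_1pc].
Qed.

Lemma isP_efun n : isP n (efun n).
Proof.
  apply isP_ext with (fun x => normN n * jacobiP (3/2) (3/2) n (cos x)); [|intros; reflexivity].
  apply isP_scal, isP_jacobi.
Qed.

Lemma isP_sin2 : isP 2 (fun x => sin x ^ 2).
Proof.
  apply isP_ext with (fun x => (1 - cos x) * (1 + cos x)).
  - apply (isP_mul 1 _ 1 _ isP_1mc isP_1pc).
  - intros x. pose proof (sin2 x) as H. unfold Rsqr in H. simpl. rewrite Rmult_1_r, H. ring.
Qed.

Lemma isP_cont d f : isP d f -> forall x, continuous f x.
Proof.
  induction 1; intros x.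
  - apply continuous_ext with (fun x => a * (1 - cos x)^r); [intros; auto|].
    apply (@ex_derive_continuous R_AbsRing R_NormedModule). auto_derive; auto.
  - apply continuous_ext with (fun x => plus (f x) (g x)); [intros; rewrite H1; reflexivity|].
    apply (@continuous_plus R_UniformSpace R_AbsRing R_NormedModule); auto.
Qed.

Lemma isP_ex d f : isP d f -> ex_RInt f 0 PI.
Proof.
  intros H. apply (@ex_RInt_continuous R_CompleteNormedModule). intros; apply (isP_cont d f H).
Qed.

Lemma ex_sum (G : nat -> R -> R) n : (forall s, ex_RInt (G s) 0 PI) ->
  ex_RInt (fun x => sum_f_R0 (fun s => G s x) n) 0 PI.
Proof.
  intros HG; induction n as [|n IH]; simpl; auto.
  apply ex_plusR; auto.
Qed.

Lemma RInt_sum (G : nat -> R -> R) n : (forall s, ex_RInt (G s) 0 PI) ->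
  RInt (fun x => sum_f_R0 (fun s => G s x) n) 0 PI = sum_f_R0 (fun s => RInt (G s) 0 PI) n.
Proof.
  intros HG; induction n as [|n IH]; simpl; auto.
  rewrite RInt_plusR; auto. rewrite IH; auto. apply ex_sum; auto.
Qed.

Lemma isP_T a b : isP (a + b) (T a b).
Proof.
  apply isP_ext with (fun x => (1 - cos x)^a * (1 + cos x)^b); [|intros; reflexivity].
  replace (a + b)%nat with (a * 1 + b * 1)%nat by lia.
  apply isP_mul; apply isP_pow; [apply isP_1mc | apply isP_1pc].
Qed.

Definition NN n := INR n + 3/2.
Definition coef (a : R) (n r s : nat) : R :=
  a * gbinom (NN n) (n - s) * gbinom (NN n) s * (-1/2)^s * (1/2)^(n-s).

Lemma expand (a : R) n r x :
  jacobiP (3/2) (3/2) n (cos x) * (a * (1 - cos x)^r) * T 2 2 x =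
  sum_f_R0 (fun s => coef a n r s * T (s + r + 2) (n - s + 2) x) n.
Proof.
  unfold jacobiP. rewrite Rmult_assoc, Rmult_comm, scal_sum.
  apply sum_eq. intros s Hs. unfold coef, T, NN.
  replace ((cos x - 1)/2) with ((-1/2) * (1 - cos x)) by field.
  replace ((cos x + 1)/2) with ((1/2) * (1 + cos x)) by field.
  rewrite !Rpow_mult_distr, !pow_add. ring.
Qed.

Lemma term_eq (a : R) n r s : (s <= n)%nat ->
  coef a n r s * (Kc * h (s + r + 2) (n - s + 2)) =
  (a * Kc * (1/2)^n * 2^(n + r + 4) * (rising (1/2) (n+2))^2 /
     (INR (fact (n + r + 4)) * INR (fact n)))
  * ((-1)^s * bin n s * rising (INR s + 5/2) r).
Proof.
  intros Hs. unfold coef, h, gbinom.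
  replace (s + r + 2 + (n - s + 2))%nat with (n + r + 4)%nat by lia.
  assert (F1 : falling (NN n) (n - s) = rising (INR s + 5/2) (n - s)).
  { rewrite <- falling_rising. f_equal. unfold NN. rewrite minus_INR by lia. lra. }
  assert (F2 : falling (NN n) s = rising (INR (n - s) + 5/2) s).
  { rewrite <- falling_rising. f_equal. unfold NN. rewrite minus_INR by lia. lra. }
  rewrite F1, F2.
  assert (E5 : forall k, 1/2 + INR (k + 2) = INR k + 5/2).
  { intros k. rewrite plus_INR. simpl INR. field. }
  assert (Rr : rising (1/2) (s + r + 2) = rising (1/2) (s + 2) * rising (INR s + 5/2) r).
  { replace (s + r + 2)%nat with (s + 2 + r)%nat by lia. rewrite rising_add, E5. reflexivity. }
  assert (Ra : rising (1/2) (n + 2) = rising (1/2) (s + 2) * rising (INR s + 5/2) (n - s)).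
  { replace (n + 2)%nat with (s + 2 + (n - s))%nat at 1 by lia. rewrite rising_add, E5. reflexivity. }
  assert (Rb : rising (1/2) (n + 2) = rising (1/2) (n - s + 2) * rising (INR (n - s) + 5/2) s).
  { replace (n + 2)%nat with (n - s + 2 + s)%nat at 1 by lia. rewrite rising_add, E5. reflexivity. }
  rewrite Rr.
  replace ((rising (1/2) (n+2))^2) with (rising (1/2) (n + 2) * rising (1/2) (n + 2)) by ring.
  rewrite Ra at 1. rewrite Rb.
  assert (Hb : bin n s = INR (fact n) / (INR (fact s) * INR (fact (n - s)))).
  { rewrite <- (bin_fact n s Hs). pose proof (INR_fact_neq_0 s). pose proof (INR_fact_neq_0 (n - s)).
    field. auto. }
  rewrite Hb.
  replace ((-1/2)^s) with ((-1)^s * (1/2)^s) by (rewrite <- Rpow_mult_distr; f_equal; field).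
  replace ((1/2)^n) with ((1/2)^s * (1/2)^(n-s)) by (rewrite <- pow_add; f_equal; lia).
  pose proof (INR_fact_neq_0 s). pose proof (INR_fact_neq_0 (n - s)).
  pose proof (INR_fact_neq_0 n). pose proof (INR_fact_neq_0 (n + r + 4)).
  field. repeat split; auto.
Qed.

Lemma orth d f : isP d f -> forall n, (d < n)%nat -> forall g,
  (forall x, g x = jacobiP (3/2) (3/2) n (cos x) * f x * T 2 2 x) -> RInt g 0 PI = 0.
Proof.
  induction 1 as [d a r f Hr Hf | d f1 f2 f Hf1 IH1 Hf2 IH2 Hf]; intros n Hn g Hg.
  - transitivity (RInt (fun x => sum_f_R0 (fun s => (fun s x => coef a n r s * T (s + r + 2) (n - s + 2) x) s x) n) 0 PI).
    { apply RInt_ext. intros x _. rewrite Hg, Hf, expand. reflexivity. }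
    rewrite RInt_sum by (intros; apply ex_scalR, T_ex).
    transitivity (sum_f_R0 (fun s => (a * Kc * (1/2)^n * 2^(n + r + 4) * (rising (1/2) (n+2))^2 /
     (INR (fact (n + r + 4)) * INR (fact n)))
      * ((-1)^s * bin n s * rising (INR s + 5/2) r)) n).
    { apply sum_eq. intros s Hs. rewrite RInt_scalR by apply T_ex.
      fold (I (s + r + 2) (n - s + 2)). rewrite I_closed by lia. apply term_eq; auto. }
    match goal with |- sum_f_R0 (fun s => ?K * _) n = 0 =>
      transitivity (K * sum_f_R0 (fun s => (-1)^s * bin n s * rising (INR s + 5/2) r) n) end.
    { rewrite scal_sum. apply sum_eq; intros; ring. }
    rewrite FD by lia. apply Rmult_0_r.
  - assert (HP : forall f', isP d f' -> isP (n + d + 4) (fun x => jacobiP (3/2) (3/2) n (cos x) * f' x * T 2 2 x)).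
    { intros f' Hf'. apply (isP_mul (n + d) _ (2+2) (T 2 2)); [apply isP_mul; auto; apply isP_jacobi | apply isP_T]. }
    transitivity (RInt (fun x => (fun x => jacobiP (3/2) (3/2) n (cos x) * f1 x * T 2 2 x) x
                                + (fun x => jacobiP (3/2) (3/2) n (cos x) * f2 x * T 2 2 x) x) 0 PI).
    { apply RInt_ext. intros x _. rewrite Hg, Hf. match goal with |- ?u = ?v => change (@eq R u v) end. ring. }
    rewrite RInt_plusR by (eapply isP_ex; apply HP; eauto).
    rewrite (IH1 n Hn _ (fun x => eq_refl)), (IH2 n Hn _ (fun x => eq_refl)). apply Rplus_0_r.
Qed.

Lemma orth_e n d f g : isP d f -> (d < n)%nat ->
  (forall x, g x = efun n x * f x * sin x ^ 4) -> RInt g 0 PI = 0.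
Proof.
  intros Hf Hd Hg. apply (orth d (fun x => normN n * f x) (isP_scal d f _ Hf) n Hd).
  intros x. rewrite Hg. unfold efun, T.
  assert (Hs : sin x ^ 4 = ((1 - cos x) * (1 + cos x))^2).
  { pose proof (sin2 x) as H. unfold Rsqr in H.
    replace (sin x ^ 4) with ((sin x * sin x)^2) by ring. rewrite H. ring. }
  rewrite Hs. ring.
Qed.

Ltac natify H := apply INR_eq; rewrite ?plus_INR; unfold omega in H; simpl INR; lra.

Theorem lemma5p7 (i j k m : nat) :
  ((omega i + omega j - omega m = 0 \/
    omega i - omega j + omega m = 0 \/
    - omega i + omega j + omega m = 0) -> Cbar i j m = 0) /\
  ((omega i + omega j + omega k - omega m = 0 \/
    omega i + omega j - omega k + omega m = 0 \/
    omega i - omega j + omega k + omega m = 0 \/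
    - omega i + omega j + omega k + omega m = 0) -> C4 i j k m = 0).
Proof.
  split.
  - intros [H|[H|H]]; unfold Cbar.
    + assert (E : m = (i + j + 2)%nat) by natify H.
      apply (orth_e m (i + j) (fun x => efun i x * efun j x)).
      * apply isP_mul; apply isP_efun.
      * lia.
      * intros; ring.
    + assert (E : j = (i + m + 2)%nat) by natify H.
      apply (orth_e j (i + m) (fun x => efun i x * efun m x)).
      * apply isP_mul; apply isP_efun.
      * lia.
      * intros; ring.
    + assert (E : i = (j + m + 2)%nat) by natify H.
      apply (orth_e i (j + m) (fun x => efun j x * efun m x)).
      * apply isP_mul; apply isP_efun.
      * lia.
      * intros; ring.
  - intros [H|[H|[H|H]]]; unfold C4.
    + assert (E : m = (i + j + k + 4)%nat) by natify H.
      apply (orth_e m (i + j + k + 2) (fun x => efun i x * efun j x * efun k x * sin x ^ 2)).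
      * apply isP_mul; [apply isP_mul; [apply isP_mul|]|]; (apply isP_efun || apply isP_sin2).
      * lia.
      * intros; ring.
    + assert (E : k = (i + j + m + 4)%nat) by natify H.
      apply (orth_e k (i + j + m + 2) (fun x => efun i x * efun j x * efun m x * sin x ^ 2)).
      * apply isP_mul; [apply isP_mul; [apply isP_mul|]|]; (apply isP_efun || apply isP_sin2).
      * lia.
      * intros; ring.
    + assert (E : j = (i + k + m + 4)%nat) by natify H.
      apply (orth_e j (i + k + m + 2) (fun x => efun i x * efun k x * efun m x * sin x ^ 2)).
      * apply isP_mul; [apply isP_mul; [apply isP_mul|]|]; (apply isP_efun || apply isP_sin2).
      * lia.
      * intros; ring.
    + assert (E : i = (j + k + m + 4)%nat) by natify H.
      apply (orth_e i (j + k + m + 2) (fun x => efun j x * efun k x * efun m x * sin x ^ 2)).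
      * apply isP_mul; [apply isP_mul; [apply isP_mul|]|]; (apply isP_efun || apply isP_sin2).
      * lia.
      * intros; ring.
Qed.
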